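(* Let $S_n=K_{1,n}$ be a star on $n+1\ge4$ vertices. Then $\pi_T(S_n)=n+1$.
   Context: A sequence is nonrepetitive if no block of consecutive terms has the form $r_1\dots r_nr_1\dots r_n$ with $n\ge1$. A (strong) total Thue colouring of a graph $G$ is a colouring of $V(G)\cup E(G)$ such that for every path $v_1,e_1,v_2,\dots,e_{k-1},v_k$ in $G$ the sequence of colours of $v_1,e_1,\dots,v_k$ is nonrepetitive, the sequence of colours of $v_1,\dots,v_k$ is nonrepetitive, and the sequence of colours of $e_1,\dots,e_{k-1}$ is nonrepetitive. $\pi_T(G)$ is the minimum number of colours in a total Thue colouring of $G$. *)

(* Defs.v *)
From mathcomp Require Import all_boot.
Set Implicit Arguments. Unset Strict Implicit. Unset Printing Implicit Defensive.

Definition nonrepetitive (s : seq nat) : Prop :=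
  ~ exists a r b : seq nat, 0 < size r /\ s = a ++ r ++ r ++ b.

Section TotalThue.
Variables (T : finType) (e : rel T).
Definition simple_graph : Prop := symmetric e /\ irreflexive e.

Definition gpath (p : seq T) : Prop :=
  match p with
  | [::] => False
  | x :: s => path e x s /\ uniq p
  end.

Variables (cv : T -> nat) (ce : T -> T -> nat).

Definition vcols (p : seq T) : seq nat := map cv p.
Definition ecols (p : seq T) : seq nat :=
  match p with [::] => [::] | x :: s => pairmap ce x s end.
(* colours of v_1, e_1, v_2, ..., e_{k-1}, v_k *)
Fixpoint tcols (p : seq T) : seq nat :=
  match p with
  | [::] => [::]
  | x :: s => match s with
              | [::] => [:: cv x]
              | y :: _ => cv x :: ce x y :: tcols s
              end
  end.

(* (strong) total Thue colouring using colours from {0,...,k-1};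
   ce gives the colour of edge xy, which must not depend on orientation *)
Definition total_thue_colouring (k : nat) : Prop :=
  (forall x, cv x < k) /\
  (forall x y, e x y -> ce x y < k) /\
  (forall x y, e x y -> ce x y = ce y x) /\
  (forall p, gpath p ->
     [/\ nonrepetitive (tcols p), nonrepetitive (vcols p)
       & nonrepetitive (ecols p)]).
End TotalThue.

Definition total_thue_number {T : finType} (e : rel T) (m : nat) : Prop :=
  (exists cv ce, total_thue_colouring e cv ce m) /\
  (forall k cv ce, total_thue_colouring e cv ce k -> m <= k).

(* star K_{1,n}: centre None, leaves Some i *)
Definition star_rel (n : nat) : rel (option 'I_n) :=
  fun x y => (x == None) (+) (y == None).
Arguments total_thue_colouring {T} e cv ce k.
Arguments total_thue_number {T} e m.
Arguments star_rel n : clear implicits.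

(* Main.v *)
Require Import Defs.
From mathcomp Require Import all_boot.
From mathcomp Require Import zify.

Lemma nonrep_of (s : seq nat) :
  (forall i l, 0 < l -> i + l + l <= size s ->
     take l (drop i s) <> take l (drop (i + l) s)) -> nonrepetitive s.
Proof.
move=> H [a [r [b [Hr E]]]]; apply: (H (size a) (size r) Hr).
  by rewrite E !size_cat; lia.
have -> : size a + size r = size (a ++ r) by rewrite size_cat.
rewrite E drop_size_cat // (catA a r) drop_size_cat // take_size_cat //.
by rewrite take_size_cat.
Qed.

Lemma nr0 : nonrepetitive [::].
Proof. by apply: nonrep_of => i l l0 /=; lia. Qed.

Lemma nr1 a : nonrepetitive [:: a].
Proof. by apply: nonrep_of => i l l0 /=; lia. Qed.

Lemma nr2 a b : a <> b -> nonrepetitive [:: a; b].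
Proof.
move=> h; apply: nonrep_of => -[|[|i]] [|[|l]] //= H1 H2; try lia; by case.
Qed.

Lemma nr3 a b c : a <> b -> b <> c -> nonrepetitive [:: a; b; c].
Proof.
move=> h1 h2; apply: nonrep_of => -[|[|[|i]]] [|[|l]] //= H1 H2; try lia; by case.
Qed.

Lemma nr5 a b c d f : a <> b -> b <> c -> c <> d -> d <> f -> b <> d ->
  nonrepetitive [:: a; b; c; d; f].
Proof.
move=> h1 h2 h3 h4 h5; apply: nonrep_of =>
  -[|[|[|[|[|i]]]]] [|[|[|l]]] //= H1 H2; try lia; by case.
Qed.

Lemma star_paths n (p : seq (option 'I_n)) : gpath (star_rel n) p ->
  (exists x, p = [:: x]) \/ (exists i, p = [:: None; Some i]) \/
  (exists i, p = [:: Some i; None]) \/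
  (exists i j, i != j /\ p = [:: Some i; None; Some j]).
Proof.
case: p => [|x [|y [|z [|w s]]]] //=.
- by move=> _; left; exists x.
- case: x => [i|]; case: y => [j|]; move=> [P U]; move: P U;
    rewrite /star_rel /= ?inE ?eqxx //= => _ _;
    [ by right; right; left; exists i | by right; left; exists j ].
- case: x => [i|]; case: y => [j|]; case: z => [k|]; move=> [P U]; move: P U;
    rewrite /star_rel /= ?inE ?eqxx ?orbT ?andbF //= => _ U;
  right; right; right; exists i, k; split=> //;
  by move: U; rewrite andbT; apply: contra => /eqP ->.
- case: x => [i|]; case: y => [j|]; case: z => [k|]; case: w => [l|];
   move=> [P U]; move: P U; rewrite /star_rel /= ?inE ?eqxx ?orbT ?andbF //=.
Qed.

Definition cv0 n (x : option 'I_n) : nat :=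
  match x with None => 0 | Some i => if i == 0 :> nat then 2 else 1 end.
Definition ce0 n (x y : option 'I_n) : nat :=
  match x, y with Some i, _ => i.+1 | _, Some j => j.+1 | _, _ => 0 end.

Theorem theorem17 (n : nat) (hn : 3 <= n) :
  total_thue_number (star_rel n) n.+1.
Proof.
split.
  exists (@cv0 n), (@ce0 n); split; [|split; [|split]].
  - case=> [i|] //=; case: ifP => _; lia.
  - case=> [i|] [j|] //= _; exact: ltn_ord.
  - by case=> [i|] [j|].
  - move=> p /star_paths [[x ->]|[[i ->]|[[i ->]|[i [j [ij ->]]]]]] /=.
    + by split; [apply: nr1|apply: nr1|apply: nr0].
    + split; [apply: nr3|apply: nr2|apply: nr1] => //=; case: eqP => ?; lia.
    + split; [apply: nr3|apply: nr2|apply: nr1] => //=; case: eqP => ?; lia.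
    + have ij' : (i : nat) <> j by move=> /val_inj /eqP; rewrite (negbTE ij).
      split; [apply: nr5|apply: nr3|apply: nr2] => //=;
        try (case: eqP => ?; lia); try (case: eqP => ?; case: eqP => ?; lia); lia.
move=> k cv ce [Hv [He [Hs Hp]]].
pose f (x : option 'I_n) : nat :=
  match x with None => cv None | Some i => ce None (Some i) end.
have fk x : f x < k by case: x => [i|] /=; [apply: He|apply: Hv].
have finj : injective f.
  have edge i : star_rel n None (Some i) by [].
  have A i : cv None <> ce None (Some i).
    move=> E; have [H _ _] := Hp [:: None; Some i] (conj (andb_true_intro
      (conj (edge i) isT)) isT).
    by apply: H; exists [::], [:: cv None], [:: cv (Some i)]; rewrite /= -E.
  case=> [i|] [j|] //= E.
  - case: (eqVneq i j) => [->//|ij].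
    have gp : gpath (star_rel n) [:: Some i; None; Some j].
      by rewrite /= !inE /= andbT ij.
    have [_ _ H] := Hp _ gp; exfalso; apply: H.
    exists [::], [:: ce (Some i) None], [::].
    by rewrite /= (Hs (Some i) None isT) E.
  - by exfalso; apply: (A i).
  - by exfalso; apply: (A j).
pose g (x : option 'I_n) : 'I_k := Ordinal (fk x).
have ginj : injective g by move=> x y /(congr1 val) /= /finj.
by have := leq_card g ginj; rewrite card_option !card_ord.
Qed.
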